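(* Let $r,n\geq1$ and let $\mathcal{P}^{\subset}_{r,n}$ be the set of nested $r$-partitions of $n$. Define $$\phi_0:\mathcal{P}^{\subset}_{r,n}\to(\mathbb{Z}^2)^{\times n}/\mathcal{S}_n,\qquad \phi_0(\mu)=\big[(i(s)-a,\ j(s)-a)\big]_{1\leq a\leq r,\ s\in\mu_a},$$ the unordered $n$-tuple (multiset) of these points. Then $\phi_0$ is injective.
   Context: A partition $\nu=(\nu^1\geq\cdots\geq\nu^l)$ is identified with the set of integral points $\{(i,j)\in\mathbb{Z}^2: 1\leq i\leq l,\ 1\leq j\leq\nu^i\}$. For a box $s=(i,j)$ write $i(s)=i$ and $j(s)=j$. An $r$-partition of $n$ is a tuple $\mu=(\mu_1,\dots,\mu_r)$ of partitions with $\sum_a|\mu_a|=n$. It is nested if $\mu_r\subseteq\mu_{r-1}\subseteq\cdots\subseteq\mu_1$ as subsets of $\mathbb{Z}^2$. The symmetric group $\mathcal{S}_n$ acts on $(\mathbb{Z}^2)^{\times n}$ by permuting the factors. *)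

(* Defs.v *)
From mathcomp Require Import all_boot all_order all_algebra.
Set Implicit Arguments. Unset Strict Implicit. Unset Printing Implicit Defensive.

Definition is_partition (p : seq nat) : bool :=
  sorted geq p && all (fun x => 0 < x) p.

Definition psize (p : seq nat) : nat := sumn p.

Definition boxes (p : seq nat) : seq (nat * nat) :=
  [seq (i.+1, j.+1) | i <- iota 0 (size p), j <- iota 0 (nth 0 p i)].

(* An r-partition of n: an r-tuple (mu_1,...,mu_r) (stored as a list of
   length r; mu_a is the entry at index a-1) of partitions, sizes summing to n. *)
Definition is_rpartition (r n : nat) (mu : seq (seq nat)) : Prop :=
  size mu = r /\ all is_partition mu /\ sumn (map psize mu) = n.

Definition is_nested (mu : seq (seq nat)) : Prop :=
  forall a, a.+1 < size mu ->
    {subset boxes (nth [::] mu a.+1) <= boxes (nth [::] mu a)}.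

Definition nested_rpartition (r n : nat) (mu : seq (seq nat)) : Prop :=
  is_rpartition r n mu /\ is_nested mu.

(* phi_0(mu) : the n-tuple of points (i(s) - a, j(s) - a), 1 <= a <= r, s in mu_a;
   as an element of (Z^2)^n / S_n it is this list up to permutation (perm_eq). *)
Definition phi0 (mu : seq (seq nat)) : seq (int * int) :=
  flatten [seq [seq ((Posz s.1 - Posz a.+1)%R, (Posz s.2 - Posz a.+1)%R)
               | s <- boxes (nth [::] mu a)] | a <- iota 0 (size mu)].

(* Main.v *)
Require Import Defs.
From mathcomp Require Import all_boot all_order all_algebra zify.

Lemma mem_boxes p x : (x \in boxes p) = [&& 0 < x.1, 0 < x.2 & x.2.-1 < nth 0 p x.1.-1].
Proof.
case: x => [i j] /=.
apply/idP/idP.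
  case/flatten_mapP => i' _ /mapP [j' Hj' [-> ->]] /=.
  by move: Hj'; rewrite mem_iota.
case/and3P; case: i => // i _; case: j => // j _ /= Hj.
have Hi : i < size p.
  by rewrite ltnNge; apply/negP => /(nth_default 0) E; rewrite E in Hj.
apply/flatten_mapP; exists i; first by rewrite mem_iota.
by apply/mapP; exists j => //; rewrite mem_iota.
Qed.

Lemma part_down p i j i' j' : is_partition p -> (i', j') \in boxes p ->
  0 < i <= i' -> 0 < j <= j' -> (i, j) \in boxes p.
Proof.
case/andP => Hs _; rewrite !mem_boxes /= => /and3P [_ _ H] /andP[Hi Hii] /andP[Hj Hjj].
rewrite Hi Hj /=.
have Hsz : i'.-1 < size p.
  by rewrite ltnNge; apply/negP => /(nth_default 0) E; rewrite E in H.
have := sorted_leq_nth (leT := geq) (fun y x z h1 h2 => leq_trans h2 h1) (fun a => leqnn a) 0 Hs.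
move=> /(_ i.-1 i'.-1); rewrite !inE => /(_ _ Hsz) /=.
have Hs2 : i.-1 < size p by lia.
move=> /(_ Hs2); have : i.-1 <= i'.-1 by lia.
move=> h /(_ h) => h2. lia.
Qed.

Lemma box_nth p i j : ((i.+1, j.+1) \in boxes p) = (j < nth 0 p i).
Proof. by rewrite mem_boxes. Qed.

Lemma part_eq p q : is_partition p -> is_partition q -> boxes p =i boxes q -> p = q.
Proof.
move=> Hp Hq E.
have En : forall i, nth 0 p i = nth 0 q i.
  move=> i; apply/eqP; rewrite eqn_leq; apply/andP; split; rewrite leqNgt; apply/negP.
    by rewrite -box_nth E box_nth ltnn.
  by rewrite -box_nth -E box_nth ltnn.
have Hsz : size p = size q.
  case/andP: Hp => _ /allP Pp; case/andP: Hq => _ /allP Pq.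
  apply/eqP; rewrite eqn_leq; apply/andP; split; rewrite leqNgt; apply/negP => H.
    have := Pp _ (mem_nth 0 H); rewrite En nth_default //; lia.
  have := Pq _ (mem_nth 0 H); rewrite -En nth_default //; lia.
by apply: (eq_from_nth (x0 := 0)) => // i _; apply: En.
Qed.

Definition sh (z : int * int) : int * int := ((z.1 - 1)%R, (z.2 - 1)%R).

Lemma sh_inj : injective sh.
Proof. case=> [x y] [x' y'] [] /= h1 h2; congr pair; lia. Qed.

Lemma phi0_cons p rest : phi0 (p :: rest) =
  [seq ((Posz s.1 - 1)%R, (Posz s.2 - 1)%R) | s <- boxes p] ++ map sh (phi0 rest).
Proof.
rewrite /phi0 /= -[1]/(1 + 0) iotaDl map_flatten -!map_comp; congr cat.
congr flatten; apply: eq_map => a /=; rewrite -map_comp; apply: eq_map => s /=.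
rewrite /sh /=; congr pair; lia.
Qed.

Lemma nested_chain mu a : is_nested mu -> a < size mu ->
  {subset boxes (nth [::] mu a) <= boxes (nth [::] mu 0)}.
Proof.
move=> Hn; elim: a => [|a IH] Ha //.
move=> x /(Hn a Ha) Hx; apply: IH => //; lia.
Qed.

Lemma nested_tail p rest : is_nested (p :: rest) -> is_nested rest.
Proof. by move=> H a Ha; apply: (H a.+1). Qed.

Definition diag_pred (i j : nat) (z : int * int) : bool :=
  (z.1 - z.2 == Posz i - Posz j)%R && (Posz i <= z.1)%R.

Lemma head_char p rest i j : is_nested (p :: rest) -> is_partition p ->
  ((i.+1, j.+1) \in boxes p) = has (diag_pred i j) (phi0 (p :: rest)).
Proof.
move=> Hn Hp; apply/idP/hasP.
  move=> H; exists (Posz i, Posz j).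
    rewrite phi0_cons mem_cat; apply/orP; left; apply/mapP; exists (i.+1, j.+1) => //=.
    congr pair; lia.
  rewrite /diag_pred /=; apply/andP; split => //; lia.
move=> [z /flatten_mapP [a]]; rewrite mem_iota add0n => Ha /mapP [s Hs ->].
have Ha2 : a < size (p :: rest) by lia.
have Hs0 := @nested_chain _ a Hn Ha2 _ Hs.
rewrite /diag_pred /= => /andP [/eqP E1 E2].
case: s Hs0 {Hs} E1 E2 => s1 s2 /= Hs0 E1 E2.
have h1 : 0 < i.+1 <= s1 by lia.
have h2 : 0 < j.+1 <= s2 by lia.
exact: (@part_down p _ _ _ _ Hp Hs0 h1 h2).
Qed.

Lemma main_inj mu : forall nu, size mu = size nu -> all is_partition mu ->
  all is_partition nu -> is_nested mu -> is_nested nu ->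
  perm_eq (phi0 mu) (phi0 nu) -> mu = nu.
Proof.
elim: mu => [|p rest IH] [|q rest'] //= [Hsz] /andP[Hp Hr] /andP[Hq Hr'] Hn Hn' Hperm.
have Epq : p = q.
  apply: part_eq => //; case=> [[|i] [|j]]; try by rewrite !mem_boxes.
  rewrite (@head_char p rest i j Hn Hp) (@head_char q rest' i j Hn' Hq).
  by apply: eq_has_r; apply: perm_mem.
subst q; rewrite !phi0_cons perm_cat2l in Hperm.
congr cons; apply: IH => //.
- exact: nested_tail Hn.
- exact: nested_tail Hn'.
- exact: (perm_map_inj sh_inj Hperm).
Qed.

Theorem lemma6p6 (r n : nat) (hr : 1 <= r) (hn : 1 <= n)
  (mu nu : seq (seq nat)) :
  nested_rpartition r n mu -> nested_rpartition r n nu ->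
  perm_eq (phi0 mu) (phi0 nu) -> mu = nu.
Proof.
move=> [[Hs [Ha _]] Hn] [[Hs' [Ha' _]] Hn'] Hp.
apply: main_inj => //; by rewrite Hs Hs'.
Qed.
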